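(* The following subgroups of $\mathrm{Homeo}(\{0,1\}^{\mathbb N})$ are all equal: $\widehat S=\langle {}_yG_y,T\rangle=\langle G_y,T\rangle=\langle {}_yG,T\rangle=\langle G,T\rangle=\langle y_{10},T\rangle$.
   Context: Let $\{0,1\}^{\mathbb N}$ be the Cantor set of infinite binary sequences and $\{0,1\}^{<\mathbb N}$ the set of finite binary words, including the empty word; juxtaposition denotes concatenation, $0^n,1^n$ ($n\ge0$) denote constant words. Homeomorphisms act on the right. Define $x,y$ by $00\eta\cdot x=0\eta$, $01\eta\cdot x=10\eta$, $1\eta\cdot x=11\eta$, and recursively $00\eta\cdot y=0(\eta\cdot y)$, $01\eta\cdot y=10(\eta\cdot y^{-1})$, $1\eta\cdot y=11(\eta\cdot y)$; $x_s$ (resp. $y_s$) sends $s\eta\mapsto s(\eta\cdot x)$ (resp. $s(\eta\cdot y)$) and fixes sequences not beginning with $s$. $F=\langle x_s\rangle$; ${}_yG_y=\langle F,\ y_s\ (\text{all } s)\rangle$; $G_y=\langle F,\ y_s\ (s\ne0^n)\rangle$; ${}_yG=\langle F,\ y_s\ (s\ne 1^n)\rangle$; $G=\langle F,\ y_s\ (s\notin\{0^n,1^n\})\rangle$. For $n\ge0$, $p_n$ is the homeomorphism with $1^k0\eta\cdot p_n=1^{k+1}0\eta$ for $0\le k\le n-1$, $1^n0\eta\cdot p_n=1^{n+1}\eta$, $1^{n+1}\eta\cdot p_n=0\eta$; $T=\langle F,p_n\ (n\ge0)\rangle$. $\widehat S$ denotes the group generated by all $x_s,y_s,p_n$. *)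

(* Defs.v *)
From mathcomp Require Import all_boot.
Set Implicit Arguments. Unset Strict Implicit. Unset Printing Implicit Defensive.

(** The Cantor set {0,1}^N; false = 0, true = 1.  Finite words are [seq bool]. *)
Definition Cantor := nat -> bool.

Definition prepend (w : seq bool) (xi : Cantor) : Cantor :=
  fun n => if n < size w then nth false w n else xi (n - size w).

Definition shift (k : nat) (xi : Cantor) : Cantor := fun n => xi (k + n).

Definition has_prefix (w : seq bool) (xi : Cantor) : bool := mkseq xi (size w) == w.

Definition x_map (xi : Cantor) : Cantor :=
  if xi 0 then prepend [:: true; true] (shift 1 xi)
  else if xi 1 then prepend [:: true; false] (shift 2 xi)
  else prepend [:: false] (shift 2 xi).

(** The recursive definition of y (and y^{-1}) as a two-state transducer:
    state true = y, state false = y^{-1}.  One step returns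
    (emitted word, next state, number of letters consumed).
    y    : 00η ↦ 0(η·y),     01η ↦ 10(η·y^{-1}),  1η ↦ 11(η·y)
    y^-1 : 0η ↦ 00(η·y^-1),  10η ↦ 01(η·y),      11η ↦ 1(η·y^-1) *)
Definition ystep (st : bool) (xi : Cantor) : seq bool * bool * nat :=
  if st then
    (if xi 0 then ([:: true; true], true, 1)
     else if xi 1 then ([:: true; false], false, 2)
     else ([:: false], true, 2))
  else
    (if xi 0 then
       (if xi 1 then ([:: true], false, 2) else ([:: false; true], true, 2))
     else ([:: false; false], false, 1)).

(** k steps of the transducer; emits at least k letters *)
Fixpoint yrun (k : nat) (st : bool) (xi : Cantor) : seq bool :=
  match k with
  | 0 => [::]
  | k'.+1 => let '(w, st', c) := ystep st xi in w ++ yrun k' st' (shift c xi)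
  end.

(** the n-th letter of xi·y is determined after n+1 steps *)
Definition y_map (xi : Cantor) : Cantor := fun n => nth false (yrun n.+1 true xi) n.

Definition localize (s : seq bool) (g : Cantor -> Cantor) (xi : Cantor) : Cantor :=
  if has_prefix s xi then prepend s (g (shift (size s) xi)) else xi.

Definition x_ (s : seq bool) : Cantor -> Cantor := localize s x_map.
Definition y_ (s : seq bool) : Cantor -> Cantor := localize s y_map.

Fixpoint lead_ones (m : nat) (xi : Cantor) : nat :=
  match m with
  | 0 => 0
  | m'.+1 => if xi 0 then (lead_ones m' (shift 1 xi)).+1 else 0
  end.

(** p_n : 1^k0η ↦ 1^{k+1}0η (k<n), 1^n0η ↦ 1^{n+1}η, 1^{n+1}η ↦ 0η *)
Definition p_ (n : nat) (xi : Cantor) : Cantor :=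
  let k := lead_ones n.+1 xi in
  if k == n.+1 then prepend [:: false] (shift n.+1 xi)
  else if k < n then prepend [:: true] xi
  else prepend (nseq n.+1 true) (shift n.+1 xi).

(** The subgroup generated by a set S of homeomorphisms (acting on the right:
    ξ·(fg) = (ξ·f)·g).  Closed under identity, products and inverses. *)
Inductive Gen (S : (Cantor -> Cantor) -> Prop) : (Cantor -> Cantor) -> Prop :=
| Gen_id : Gen S (fun xi => xi)
| Gen_base f : S f -> Gen S f
| Gen_mul f g : Gen S f -> Gen S g -> Gen S (fun xi => g (f xi))
| Gen_inv f h : Gen S f -> (forall xi, f (h xi) = xi) ->
                (forall xi, h (f xi) = xi) -> Gen S h.

Definition union (A B : (Cantor -> Cantor) -> Prop) : (Cantor -> Cantor) -> Prop :=
  fun f => A f \/ B f.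

Definition F_gens f := exists s, f = x_ s.
Definition p_gens f := exists n, f = p_ n.

Definition Shat := Gen (fun f => F_gens f \/ (exists s, f = y_ s) \/ p_gens f).
Definition Tgrp := Gen (union F_gens p_gens).
Definition yGy := Gen (union F_gens (fun f => exists s, f = y_ s)).
(* G_y : y_s for s <> 0^n, i.e. s contains a 1 *)
Definition Gy := Gen (union F_gens (fun f => exists s, true \in s /\ f = y_ s)).
(* _yG : y_s for s <> 1^n, i.e. s contains a 0 *)
Definition yG := Gen (union F_gens (fun f => exists s, false \in s /\ f = y_ s)).
(* G : y_s for s not in {0^n, 1^n} *)
Definition Gplain :=
  Gen (union F_gens (fun f => exists s, true \in s /\ false \in s /\ f = y_ s)).

Definition join (H K : (Cantor -> Cantor) -> Prop) := Gen (union H K).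

(* Main.v *)
Require Import Defs.
From mathcomp Require Import all_boot zify.
From Stdlib Require Import FunctionalExtensionality.
Set Implicit Arguments. Unset Strict Implicit.

Lemma prepend_lt w (e : Cantor) n : n < size w -> prepend w e n = nth false w n.
Proof. by rewrite /prepend => ->. Qed.
Lemma prepend_ge w (e : Cantor) n : size w <= n -> prepend w e n = e (n - size w).
Proof. by rewrite /prepend ltnNge => ->. Qed.
Lemma prepend0 b w (e : Cantor) : prepend (b :: w) e 0 = b.
Proof. by []. Qed.
Lemma prependS b w (e : Cantor) n : prepend (b :: w) e n.+1 = prepend w e n.
Proof. by rewrite /prepend /= ltnS subSS. Qed.
Lemma prepend_nil (e : Cantor) : prepend [::] e = e.
Proof. apply: functional_extensionality => n; by rewrite /prepend /= subn0. Qed.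
Lemma shift0 (e : Cantor) : shift 0 e = e.
Proof. by apply: functional_extensionality => n. Qed.
Lemma shift_prepend k w (e : Cantor) : size w = k -> shift k (prepend w e) = e.
Proof.
move=> <-; apply: functional_extensionality => n.
by rewrite /shift prepend_ge ?leq_addr // addKn.
Qed.
Lemma shift1_cons b w (e : Cantor) : shift 1 (prepend (b :: w) e) = prepend w e.
Proof. apply: functional_extensionality => n; by rewrite /shift add1n prependS. Qed.
Lemma shift2_cons a b w (e : Cantor) : shift 2 (prepend [:: a, b & w] e) = prepend w e.
Proof. apply: functional_extensionality => n; by rewrite /shift -[2 + n]/(n.+2) !prependS. Qed.
Lemma prepend_cat a b (e : Cantor) : prepend (a ++ b) e = prepend a (prepend b e).
Proof.
apply: functional_extensionality => n.
rewrite /prepend size_cat nth_cat.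
case: (ltnP n (size a)) => Ha.
  by have -> : n < size a + size b by lia.
case: (ltnP n (size a + size b)) => Hab.
  by have -> : n - size a < size b by lia.
have -> : n - size a < size b = false by lia.
by rewrite subnDA.
Qed.
Lemma has_prefix_prepend w (e : Cantor) : has_prefix w (prepend w e).
Proof.
rewrite /has_prefix; apply/eqP; apply: (@eq_from_nth _ false); rewrite size_mkseq // => i Hi.
by rewrite nth_mkseq // prepend_lt.
Qed.
Lemma has_prefixP w (xi : Cantor) : has_prefix w xi -> xi = prepend w (shift (size w) xi).
Proof.
move/eqP=> Hw; apply: functional_extensionality => n.
case: (ltnP n (size w)) => Hn.
  by rewrite prepend_lt // -Hw nth_mkseq.
by rewrite prepend_ge // /shift subnKC.
Qed.
Lemma has_prefix_nil (xi : Cantor) : has_prefix [::] xi.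
Proof. by []. Qed.
Lemma has_prefix_cons b s (xi : Cantor) :
  has_prefix (b :: s) xi = (xi 0 == b) && has_prefix s (shift 1 xi).
Proof.
rewrite /has_prefix /= -eqseq_cons /mkseq /=; congr (_ == _); congr (_ :: _).
by rewrite -[1]/(1 + 0) iotaDl -map_comp.
Qed.
Lemma localize_prepend s g (e : Cantor) : localize s g (prepend s e) = prepend s (g e).
Proof. by rewrite /localize has_prefix_prepend (shift_prepend _ (erefl _)). Qed.
Lemma localize_out s g (xi : Cantor) : ~~ has_prefix s xi -> localize s g xi = xi.
Proof. by rewrite /localize => /negbTE ->. Qed.
Lemma localize_nil g : localize [::] g = g.
Proof.
apply: functional_extensionality => xi.
by rewrite /localize has_prefix_nil prepend_nil /= shift0.
Qed.
Lemma localize_inv s f g : (forall xi, f (g xi) = xi) ->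
  forall xi, localize s f (localize s g xi) = xi.
Proof.
move=> H xi; case Hp: (has_prefix s xi).
  by rewrite (has_prefixP Hp) !localize_prepend H.
by rewrite (localize_out g) ?Hp // (localize_out f) ?Hp.
Qed.
Lemma decomp1 (xi : Cantor) : xi = prepend [:: xi 0] (shift 1 xi).
Proof.
have := @has_prefixP (mkseq xi 1) xi.
by rewrite /has_prefix size_mkseq eqxx => /(_ isT).
Qed.
Lemma decomp2 (xi : Cantor) : xi = prepend [:: xi 0; xi 1] (shift 2 xi).
Proof.
have := @has_prefixP (mkseq xi 2) xi.
by rewrite /has_prefix size_mkseq eqxx => /(_ isT).
Qed.
Lemma decompY (xi : Cantor) : exists e,
  xi = prepend [:: false; false] e \/ xi = prepend [:: false; true] e \/
  xi = prepend [:: true] e.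
Proof.
case E0: (xi 0).
  by exists (shift 1 xi); right; right; rewrite {1}(decomp1 xi) E0.
exists (shift 2 xi); case E1: (xi 1); [right; left | left];
  by rewrite {1}(decomp2 xi) E0 E1.
Qed.
Lemma decompYi (xi : Cantor) : exists e,
  xi = prepend [:: false] e \/ xi = prepend [:: true; false] e \/
  xi = prepend [:: true; true] e.
Proof.
case E0: (xi 0).
  exists (shift 2 xi); case E1: (xi 1); [right; right | right; left];
  by rewrite {1}(decomp2 xi) E0 E1.
by exists (shift 1 xi); left; rewrite {1}(decomp1 xi) E0.
Qed.

Lemma cat_pre a w (e : Cantor) : prepend a (prepend w e) = prepend (a ++ w) e.
Proof. by rewrite prepend_cat. Qed.

Lemma xmap00 w (e : Cantor) : x_map (prepend [:: false, false & w] e) = prepend (false :: w) e.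
Proof. by rewrite /x_map prepend0 prependS prepend0 shift2_cons /= cat_pre. Qed.
Lemma xmap01 w (e : Cantor) : x_map (prepend [:: false, true & w] e) = prepend [:: true, false & w] e.
Proof. by rewrite /x_map prepend0 prependS prepend0 shift2_cons /= cat_pre. Qed.
Lemma xmap1 w (e : Cantor) : x_map (prepend (true :: w) e) = prepend [:: true, true & w] e.
Proof. by rewrite /x_map prepend0 shift1_cons /= cat_pre. Qed.

Definition x_inv (xi : Cantor) : Cantor :=
  if xi 0 then (if xi 1 then prepend [:: true] (shift 2 xi)
                else prepend [:: false; true] (shift 2 xi))
  else prepend [:: false; false] (shift 1 xi).
Lemma xinv0 w (e : Cantor) : x_inv (prepend (false :: w) e) = prepend [:: false, false & w] e.
Proof. by rewrite /x_inv prepend0 shift1_cons /= cat_pre. Qed.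
Lemma xinv10 w (e : Cantor) : x_inv (prepend [:: true, false & w] e) = prepend [:: false, true & w] e.
Proof. by rewrite /x_inv prepend0 prependS prepend0 shift2_cons /= cat_pre. Qed.
Lemma xinv11 w (e : Cantor) : x_inv (prepend [:: true, true & w] e) = prepend (true :: w) e.
Proof. by rewrite /x_inv prepend0 prependS prepend0 shift2_cons /= cat_pre. Qed.

Lemma x_inv_x xi : x_inv (x_map xi) = xi.
Proof.
have [e [->|[->|->]]] := decompY xi.
- by rewrite xmap00 xinv0.
- by rewrite xmap01 xinv10.
- by rewrite xmap1 xinv11.
Qed.
Lemma x_x_inv xi : x_map (x_inv xi) = xi.
Proof.
have [e [->|[->|->]]] := decompYi xi.
- by rewrite xinv0 xmap00.
- by rewrite xinv10 xmap01.
- by rewrite xinv11 xmap1.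
Qed.

Lemma p0_0 w (e : Cantor) : p_ 0 (prepend (false :: w) e) = prepend (true :: w) e.
Proof.
by rewrite /p_ /= shift1_cons cat_pre.
Qed.
Lemma p0_1 w (e : Cantor) : p_ 0 (prepend (true :: w) e) = prepend (false :: w) e.
Proof.
by rewrite /p_ /= shift1_cons cat_pre.
Qed.
Lemma p0_inv xi : p_ 0 (p_ 0 xi) = xi.
Proof.
rewrite (decomp1 xi); case: (xi 0).
- by rewrite p0_1 p0_0.
- by rewrite p0_0 p0_1.
Qed.

Definition ymap (st : bool) (xi : Cantor) : Cantor :=
  fun n => nth false (yrun n.+1 st xi) n.

Lemma ystep_size st xi : 0 < size (ystep st xi).1.1.
Proof. by rewrite /ystep; case: st; case: (xi 0); case: (xi 1). Qed.

Lemma yrun_size k st xi : k <= size (yrun k st xi).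
Proof.
elim: k st xi => // k IH st xi /=.
have := ystep_size st xi.
case: (ystep st xi) => [[w st'] c] /= Hw.
rewrite size_cat; have := IH st' (shift c xi); lia.
Qed.

Lemma yrun_ext d k st xi : exists r, yrun (k + d) st xi = yrun k st xi ++ r.
Proof.
elim: k st xi => [|k IH] st xi; first by exists (yrun d st xi).
rewrite addSn /=.
case: (ystep st xi) => [[w st'] c].
have [r ->] := IH st' (shift c xi).
by exists r; rewrite catA.
Qed.

Lemma ymap_step st xi :
  ymap st xi = prepend (ystep st xi).1.1 (ymap (ystep st xi).1.2 (shift (ystep st xi).2 xi)).
Proof.
apply: functional_extensionality => n.
have := ystep_size st xi.
rewrite /ymap /=.
case: (ystep st xi) => [[w st'] c] /= Hw.
rewrite nth_cat /prepend.
case: ltnP => // Hn.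
rewrite /ymap; set j := n - size w.
have [r Hr] := yrun_ext (n - j.+1) j.+1 st' (shift c xi).
have E : j.+1 + (n - j.+1) = n by rewrite /j; lia.
rewrite E in Hr; rewrite Hr nth_cat; have := yrun_size j.+1 st' (shift c xi).
by case: ltnP => //; lia.
Qed.

Lemma yT00 w (e : Cantor) : ymap true (prepend [:: false, false & w] e) = prepend [:: false] (ymap true (prepend w e)).
Proof. by rewrite ymap_step /ystep prepend0 prependS prepend0 /= shift2_cons. Qed.
Lemma yT01 w (e : Cantor) : ymap true (prepend [:: false, true & w] e) = prepend [:: true; false] (ymap false (prepend w e)).
Proof. by rewrite ymap_step /ystep prepend0 prependS prepend0 /= shift2_cons. Qed.
Lemma yT1 w (e : Cantor) : ymap true (prepend (true :: w) e) = prepend [:: true; true] (ymap true (prepend w e)).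
Proof. by rewrite ymap_step /ystep prepend0 /= shift1_cons. Qed.
Lemma yF0 w (e : Cantor) : ymap false (prepend (false :: w) e) = prepend [:: false; false] (ymap false (prepend w e)).
Proof. by rewrite ymap_step /ystep prepend0 /= shift1_cons. Qed.
Lemma yF10 w (e : Cantor) : ymap false (prepend [:: true, false & w] e) = prepend [:: false; true] (ymap true (prepend w e)).
Proof. by rewrite ymap_step /ystep prepend0 prependS prepend0 /= shift2_cons. Qed.
Lemma yF11 w (e : Cantor) : ymap false (prepend [:: true, true & w] e) = prepend [:: true] (ymap false (prepend w e)).
Proof. by rewrite ymap_step /ystep prepend0 prependS prepend0 /= shift2_cons. Qed.

Lemma prepend_eqn w (f g : Cantor) n : 0 < size w ->
  (forall m, m < n -> f m = g m) -> prepend w f n = prepend w g n.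
Proof.
move=> Hw H; rewrite /prepend; case: ltnP => // Hn; apply: H; lia.
Qed.

Lemma ymap_inv n : forall xi,
  ymap false (ymap true xi) n = xi n /\ ymap true (ymap false xi) n = xi n.
Proof.
elim/ltn_ind: n => n IH xi; split.
- have [e [->|[->|->]]] := decompY xi.
  + rewrite (yT00 [::]) prepend_nil (yF0 [::]) prepend_nil.
    by apply: prepend_eqn => // m Hm; case: (IH m Hm e).
  + rewrite (yT01 [::]) prepend_nil (yF10 [::]) prepend_nil.
    by apply: prepend_eqn => // m Hm; case: (IH m Hm e).
  + rewrite (yT1 [::]) prepend_nil (yF11 [::]) prepend_nil.
    by apply: prepend_eqn => // m Hm; case: (IH m Hm e).
- have [e [->|[->|->]]] := decompYi xi.
  + rewrite (yF0 [::]) prepend_nil (yT00 [::]) prepend_nil.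
    by apply: prepend_eqn => // m Hm; case: (IH m Hm e).
  + rewrite (yF10 [::]) prepend_nil (yT01 [::]) prepend_nil.
    by apply: prepend_eqn => // m Hm; case: (IH m Hm e).
  + rewrite (yF11 [::]) prepend_nil (yT1 [::]) prepend_nil.
    by apply: prepend_eqn => // m Hm; case: (IH m Hm e).
Qed.

Lemma yFT xi : ymap false (ymap true xi) = xi.
Proof. by apply: functional_extensionality => n; case: (ymap_inv n xi). Qed.
Lemma yTF xi : ymap true (ymap false xi) = xi.
Proof. by apply: functional_extensionality => n; case: (ymap_inv n xi). Qed.

Definition Hg := join (fun g => g = y_ [:: true; false]) Tgrp.

Lemma Hg_T f : Tgrp f -> Hg f.
Proof. by move=> H; apply: Gen_base; right. Qed.
Lemma Hg_x s : Hg (x_ s).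
Proof. by apply: Hg_T; apply: Gen_base; left; exists s. Qed.
Lemma Hg_p n : Hg (p_ n).
Proof. by apply: Hg_T; apply: Gen_base; right; exists n. Qed.
Lemma Hg_y10 : Hg (y_ [:: true; false]).
Proof. by apply: Gen_base; left. Qed.

Definition Reach a b := exists g gi, Hg g /\ Hg gi /\
  (forall xi, g (gi xi) = xi) /\ (forall xi, gi (g xi) = xi) /\
  (forall e, g (prepend a e) = prepend b e).

Lemma reach_sym a b : Reach a b -> Reach b a.
Proof.
move=> [g [gi [Hg1 [Hg2 [H1 [H2 H3]]]]]].
exists gi, g; do 4 split => //.
by move=> e; rewrite -H3 H2.
Qed.

Lemma reach_y a b : Reach a b -> Hg (y_ a) -> Hg (y_ b).
Proof.
move=> [g [gi [Hg1 [Hg2 [H1 [H2 H3]]]]]] Hy.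
have -> : y_ b = fun xi => g (y_ a (gi xi)).
  apply: functional_extensionality => xi.
  case Hp: (has_prefix b xi).
    rewrite (has_prefixP Hp); set e := shift _ xi.
    have -> : gi (prepend b e) = prepend a e by rewrite -H3 H2.
    by rewrite /y_ !localize_prepend H3.
  rewrite /y_ (localize_out _ (negbT Hp)).
  case Hq: (has_prefix a (gi xi)).
    move: Hp; rewrite -{1}(H1 xi) (has_prefixP Hq) H3 has_prefix_prepend //.
  by rewrite (localize_out _ (negbT Hq)) H1.
exact: (Gen_mul (Gen_mul Hg2 Hy) Hg1).
Qed.

Lemma Hg_xinv s : Hg (localize s x_inv).
Proof.
apply: (Gen_inv (Hg_x s)); apply: localize_inv; [exact: x_x_inv | exact: x_inv_x].
Qed.

Lemma reach_x s a b : (forall e, x_map (prepend a e) = prepend b e) ->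
  Reach (s ++ a) (s ++ b).
Proof.
move=> H; exists (x_ s), (localize s x_inv); split; first exact: Hg_x.
split; first exact: Hg_xinv.
split; first by apply: localize_inv; exact: x_x_inv.
split; first by apply: localize_inv; exact: x_inv_x.
by move=> e; rewrite !prepend_cat /x_ localize_prepend H.
Qed.

Lemma mA s w : Reach (s ++ [:: false, false & w]) (s ++ false :: w).
Proof. apply: reach_x => e; exact: xmap00. Qed.
Lemma mB s w : Reach (s ++ [:: false, true & w]) (s ++ [:: true, false & w]).
Proof. apply: reach_x => e; exact: xmap01. Qed.
Lemma mC s w : Reach (s ++ true :: w) (s ++ [:: true, true & w]).
Proof. apply: reach_x => e; exact: xmap1. Qed.
Lemma mD w : Reach (false :: w) (true :: w).
Proof.
exists (p_ 0), (p_ 0); split; first exact: Hg_p.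
split; first exact: Hg_p.
split; first exact: p0_inv.
split; first exact: p0_inv.
by move=> e; rewrite p0_0.
Qed.

Lemma Hg_y_nonempty t : t != [::] -> Hg (y_ t).
Proof.
have H0 : Hg (y_ [:: false]).
  apply: (reach_y (mA [::] [::])).
  exact: (reach_y (reach_sym (mD [:: false])) Hg_y10).
have H1 : Hg (y_ [:: true]) by exact: (reach_y (mD [::]) H0).
have [n] := ubnP (size t); elim: n t => // n IH t Hs Ht.
move: Hs Ht; case/lastP: t => [|t' c] //.
case/lastP: t' => [|u b].
  by case: c.
move=> + _.
rewrite -!cats1 -catA /= size_cat /= => Hs.
have IH' : forall v, size v < n -> v != [::] -> Hg (y_ v) by [].
have H10 : forall u, size u + 2 < n.+1 -> Hg (y_ (u ++ [:: true; false])).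
  case/lastP => [|v a] Hsu; first exact: Hg_y10.
  move: Hsu; rewrite -cats1 -catA /= size_cat /= => Hsu.
  case: a.
    apply: (reach_y (mC v [:: false])).
    by apply: IH; [rewrite size_cat /=; lia | case: v {Hsu}].
  apply: (reach_y (reach_sym (mB v [:: false]))).
  have := mA (v ++ [:: true]) [::]; rewrite -!catA /= => HA.
  apply: (reach_y (reach_sym HA)).
  by apply: IH; [rewrite size_cat /=; lia | case: v {Hsu HA}].
case: b Hs; case: c => Hs.
- apply: (reach_y (mC u [::])).
  by apply: IH; [rewrite size_cat /=; lia | case: u {Hs}].
- exact: H10.
- apply: (reach_y (reach_sym (mB u [::]))); exact: H10.
- apply: (reach_y (reach_sym (mA u [::]))).
  by apply: IH; [rewrite size_cat /=; lia | case: u {Hs}].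
Qed.

Lemma loc10_0 g w (e : Cantor) : localize [:: true; false] g (prepend (false :: w) e) = prepend (false :: w) e.
Proof. by rewrite localize_out // has_prefix_cons prepend0. Qed.
Lemma loc10_11 g w (e : Cantor) : localize [:: true; false] g (prepend [:: true, true & w] e) = prepend [:: true, true & w] e.
Proof. by rewrite localize_out // has_prefix_cons prepend0 shift1_cons has_prefix_cons prepend0. Qed.
Lemma loc11_0 g w (e : Cantor) : localize [:: true; true] g (prepend (false :: w) e) = prepend (false :: w) e.
Proof. by rewrite localize_out // has_prefix_cons prepend0. Qed.
Lemma loc11_10 g w (e : Cantor) : localize [:: true; true] g (prepend [:: true, false & w] e) = prepend [:: true, false & w] e.
Proof. by rewrite localize_out // has_prefix_cons prepend0 shift1_cons has_prefix_cons prepend0. Qed.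
Lemma loc0_1 g w (e : Cantor) : localize [:: false] g (prepend (true :: w) e) = prepend (true :: w) e.
Proof. by rewrite localize_out // has_prefix_cons prepend0. Qed.

Definition yi10 := localize [:: true; false] (ymap false).

Lemma Hg_yi10 : Hg yi10.
Proof.
apply: (Gen_inv Hg_y10); apply: localize_inv; [exact: yTF | exact: yFT].
Qed.

Lemma y_nil_eq : y_ [::] = fun xi => y_ [:: true; true] (yi10 (y_ [:: false] (x_ [::] xi))).
Proof.
apply: functional_extensionality => xi.
rewrite /y_ /x_ /yi10 !localize_nil.
change y_map with (ymap true).
have [e [->|[->|->]]] := decompY xi.
- rewrite xmap00 localize_prepend loc10_0 loc11_0 (yT00 [::]) prepend_nil //.
- rewrite xmap01 loc0_1 localize_prepend loc11_10 (yT01 [::]) prepend_nil //.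
- rewrite xmap1 loc0_1 loc10_11 localize_prepend (yT1 [::]) prepend_nil //.
Qed.

Lemma Hg_y s : Hg (y_ s).
Proof.
case: s => [|b s]; last exact: Hg_y_nonempty.
rewrite y_nil_eq.
apply: (Gen_mul (Gen_mul (Gen_mul (Hg_x [::]) (Hg_y_nonempty (t := [:: false]) isT)) Hg_yi10)
         (Hg_y_nonempty (t := [:: true; true]) isT)).
Qed.

Lemma Gen_mono (S S' : (Cantor -> Cantor) -> Prop) :
  (forall f, S f -> Gen S' f) -> forall f, Gen S f -> Gen S' f.
Proof.
move=> H f; elim => {f}.
- exact: Gen_id.
- exact: H.
- move=> f g _ Hf _ Hg'; exact: Gen_mul Hf Hg'.
- move=> f h _ Hf H1 H2; exact: Gen_inv Hf H1 H2.
Qed.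

Lemma T_Shat f : Tgrp f -> Shat f.
Proof.
apply: Gen_mono => g [Hg'|Hg']; apply: Gen_base; [left | right; right]; exact: Hg'.
Qed.

Lemma Shat_Hg f : Shat f -> Hg f.
Proof.
apply: Gen_mono => g [[s ->]|[[s ->]|[n ->]]].
- exact: Hg_x.
- exact: Hg_y.
- exact: Hg_p.
Qed.

Lemma key (K : (Cantor -> Cantor) -> Prop) :
  K (y_ [:: true; false]) -> (forall f, K f -> Shat f) ->
  forall f, Shat f <-> join K Tgrp f.
Proof.
move=> HK HKS f; split.
- move=> /Shat_Hg; apply: Gen_mono => g [->|HT]; apply: Gen_base; [left | right] => //.
- apply: Gen_mono => g [/HKS // | /T_Shat //].
Qed.

Lemma gens_Shat (P : (Cantor -> Cantor) -> Prop) :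
  (forall f, P f -> exists s, f = y_ s) ->
  forall f, Gen (union F_gens P) f -> Shat f.
Proof.
move=> HP; apply: Gen_mono => g [Hg'|/HP Hg']; apply: Gen_base; [left | right; left] => //.
Qed.

Theorem lemma6p1 :
  (forall f, Shat f <-> join yGy Tgrp f) /\
  (forall f, Shat f <-> join Gy Tgrp f) /\
  (forall f, Shat f <-> join yG Tgrp f) /\
  (forall f, Shat f <-> join Gplain Tgrp f) /\
  (forall f, Shat f <-> join (fun g => g = y_ [:: true; false]) Tgrp f).
Proof.
split; [|split; [|split; [|split]]]; apply: key.
- by apply: Gen_base; right; exists [:: true; false].
- by apply: gens_Shat.
- by apply: Gen_base; right; exists [:: true; false].
- by apply: gens_Shat => g [s [_ ->]]; exists s.
- by apply: Gen_base; right; exists [:: true; false].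
- by apply: gens_Shat => g [s [_ ->]]; exists s.
- by apply: Gen_base; right; exists [:: true; false].
- by apply: gens_Shat => g [s [_ [_ ->]]]; exists s.
- by [].
- by move=> g ->; apply: Gen_base; right; left; exists [:: true; false].
Qed.
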